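(* Let $\mathbb A$ be the $Q$-MCR algebra described in the context. Assume that $\widetilde Q(x_1,x_2)$ is invertible for all $(x_1,x_2)\in X^2$ and that there is $\varkappa\in\mathbb R$ with $\operatorname{Tr}(\widetilde Q(x,x)^{-1}v^{(2)})=\varkappa\operatorname{Tr}v^{(2)}$ for all $x\in X$, $v^{(2)}\in V^{\otimes2}$. Let $\sharp_1,\dots,\sharp_n\in\{+,-\}$ with $\sharp_i=+$, $\sharp_{i+1}=-$ for some $i\in\{1,\dots,n-1\}$. Then for all $f^{(n)}\in\mathfrak F^{(n)}$, $$\Phi(f^{(n)};\sharp_1,\dots,\sharp_n)=\Phi\big(\widetilde Q_i(x_i,x_{i+1})^{-1}f^{(n)}(x_1,\dots,x_{i+1},x_i,\dots,x_n);\sharp_1,\dots,\sharp_{i+1},\sharp_i,\dots,\sharp_n\big)-\varkappa\,\Phi(g^{(n-2)};\sharp_1,\dots,\sharp_{i-1},\sharp_{i+2},\dots,\sharp_n),$$ where $g^{(n-2)}(x_1,\dots,x_{n-2})=\int_X\operatorname{Tr}_if^{(n)}(x_1,\dots,x_{i-1},x,x,x_i,\dots,x_{n-2})\,dx$.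
   Context: Let $d\ge2$, $X=\mathbb R^d$, $x=(y,z)$ with $y\in Y:=\mathbb R$, $z\in Z:=\mathbb R^{d-1}$. $V=\mathbb C^r$ with standard basis $e_1,\dots,e_r$, $J$ complex conjugation, $\langle u,v\rangle_{V^{\otimes n}}:=(u,Jv)$. $Q:Y^2\to\mathcal L(V^{\otimes2})$ continuous, unitary-valued, $Q(y_1,y_2)^*=Q(y_2,y_1)$, satisfying $Q_1(y_1,y_2)Q_2(y_1,y_3)Q_1(y_2,y_3)=Q_2(y_2,y_3)Q_1(y_1,y_3)Q_2(y_1,y_2)$, where $C_i$ is $C\in\mathcal L(V^{\otimes2})$ acting on factors $i,i+1$. $Q(x_1,x_2):=Q(y_1,y_2)$. $\mathbb S^{(n)}(v_1\otimes\cdots\otimes v_n)=Jv_n\otimes\cdots\otimes Jv_1$ (antilinear); $\widehat Q(x_1,x_2)=\mathbb S^{(2)}Q(x_2,x_1)\mathbb S^{(2)}$; $\langle\widetilde Q(x_1,x_2)e_i\otimes e_j,e_k\otimes e_l\rangle=\langle Q(x_1,x_2)e_k\otimes e_i,e_l\otimes e_j\rangle$. $\operatorname{Tr}(v)=\sum_k(v,e_k\otimes e_k)$ on $V^{\otimes2}$, $\operatorname{Tr}_i$ applies it to factors $i,i+1$ of $V^{\otimes n}$. $\mathcal G=L^2(Z)$; $\mathfrak F^{(n)}$ is the span of $\varphi(y_1..y_n)g_1(z_1)\cdots g_n(z_n)$, $\varphi\in C_0(Y^n;V^{\otimes n})$, $g_i\in\mathcal G$. $\mathbb A$ is the unital $*$-algebra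 spanned by $\mathbf 1$ and $\Phi(f^{(n)};\sharp_1..\sharp_n)$, linear in $f^{(n)}\in\mathfrak F^{(n)}$, with product given by tensoring kernels and concatenating signs, involution $\Phi(f;\sharp_1..\sharp_n)^*=\Phi(\mathbb S^{(n)}f(x_n..x_1);-\sharp_n..-\sharp_1)$, and relations: for $\sharp_i=\sharp_{i+1}=+$: $\Phi(f;\sharp)=\Phi(Q_i(x_i,x_{i+1})f(..,x_{i+1},x_i,..);\sharp)$; for $\sharp_i=\sharp_{i+1}=-$: same with $\widehat Q_i(x_i,x_{i+1})$; for $\sharp_i=-,\sharp_{i+1}=+$: $\Phi(f;\sharp)=\Phi(\widetilde Q_i(x_{i+1},x_i)f(..,x_{i+1},x_i,..);\sharp_1..\sharp_{i+1},\sharp_i..\sharp_n)+\Phi(g^{(n-2)};\sharp_1..\sharp_{i-1},\sharp_{i+2}..\sharp_n)$ with $g^{(n-2)}$ as in the claim. *)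

(* Defs.v *)
From HB Require Import structures.
From mathcomp Require Import all_boot all_order all_algebra.
From mathcomp Require Import all_classical all_reals all_analysis.
From mathcomp.real_closed Require Import complex.
Import Order.TTheory GRing.Theory Num.Theory.
Import numFieldNormedType.Exports.
Set Implicit Arguments.
Unset Strict Implicit.
Unset Printing Implicit Defensive.
Local Open Scope ring_scope.

(* Y := R, Z := R^(d-1) (as (d.-1).-tuple R, with its product sigma-algebra), *)
(* X := Y * Z.  V := C^r with standard basis indexed by 'I_r.                 *)
(* A vector of V^{(x)n} is its coefficient function ('I_n -> 'I_r) -> C.      *)
(* An operator on V (x) V is its matrix  A (k,l) (i,j) = <A e_i(x)e_j, e_k(x)e_l>,*)
(* i.e. the coefficient of e_k (x) e_l in A (e_i (x) e_j).                    *)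
(* Points of X^n are functions 'I_n -> X (position 0 is x_1).                *)

Section QMCR.
Variables (R : realType) (d r : nat).

Definition reC (z : R[i]) : R := complex.Re z.
Definition imC (z : R[i]) : R := complex.Im z.

Definition Zsp := (d.-1).-tuple R.
Definition Xsp := (R * Zsp)%type.
Definition tens (n : nat) := ('I_n -> 'I_r) -> R[i].
Definition kern (n : nat) := ('I_n -> Xsp) -> tens n.
Definition op2 := ('I_r * 'I_r)%type -> ('I_r * 'I_r)%type -> R[i].

Definition op_mul (A B : op2) : op2 :=
  fun p q => \sum_(u : 'I_r * 'I_r) A p u * B u q.
Definition op_id : op2 := fun p q => (p == q)%:R.
Definition op_adj (A : op2) : op2 := fun p q => conjc (A q p).
Definition op_app2 (A : op2) (v : ('I_r * 'I_r)%type -> R[i]) :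
  ('I_r * 'I_r)%type -> R[i] := fun p => \sum_(u : 'I_r * 'I_r) A p u * v u.
Definition trace2 (v : ('I_r * 'I_r)%type -> R[i]) : R[i] :=
  \sum_(k < r) v (k, k).

Definition nxt n (i : 'I_n) : 'I_n := insubd i i.+1.
Definition sw n (i : 'I_n) (k : 'I_n) : 'I_n :=
  if k == i then nxt i else if k == nxt i then i else k.
Definition upd n (T : Type) (t : 'I_n -> T) (i : 'I_n) (a : T) : 'I_n -> T :=
  fun k => if k == i then a else t k.
(* C_i : the operator C acting on the factors i, i+1 of V^{(x)n} *)
Definition op_at n (i : 'I_n) (A : op2) (t : tens n) : tens n :=
  fun idx => \sum_(u : 'I_r * 'I_r)
     A (idx i, idx (nxt i)) u * t (upd (upd idx i u.1) (nxt i) u.2).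
Definition ext m (T : Type) (ys : 'I_m -> T) (v : T) (p : nat) : T :=
  if @insub _ (fun q => q < m)%N _ p is Some q then ys q else v.
(* (y_1,..,y_{i-1}, v, v, y_i, .., y_m) with v in positions i, i+1 *)
Definition ins2 n m (T : Type) (i : 'I_n) (ys : 'I_m -> T) (v : T) : 'I_n -> T :=
  fun k => if (k < i)%N then ext ys v k
           else if (k <= i.+1)%N then v else ext ys v (k - 2).
(* removal of positions i, i+1 *)
Definition rem2 n (T : Type) (i : 'I_n) (s : 'I_n -> T) : 'I_(n - 2) -> T :=
  fun k => s (insubd i (if (k < i)%N then nat_of_ord k else k.+2)).
Definition Tr_at n (i : 'I_n) (t : tens n) : tens (n - 2) :=
  fun jdx => \sum_(k < r) t (ins2 i jdx k).

(* Lebesgue integration over Z = R^(d-1), written as an iterated integral *)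
Fixpoint iintR (k : nat) : (k.-tuple R -> R) -> R :=
  match k return (k.-tuple R -> R) -> R with
  | 0 => fun h => h [tuple]
  | k'.+1 => fun h =>
      Rintegral lebesgue_measure setT (fun t => iintR (fun z => h [tuple of t :: z]))
  end.
Fixpoint iintE (k : nat) : (k.-tuple R -> \bar R) -> \bar R :=
  match k return (k.-tuple R -> \bar R) -> \bar R with
  | 0 => fun h => h [tuple]
  | k'.+1 => fun h =>
      (\int[lebesgue_measure]_(t in setT) iintE (fun z => h [tuple of t :: z]))%E
  end.
Definition intX (F : Xsp -> R[i]) : R[i] :=
  Complex
   (Rintegral lebesgue_measure setT (fun y => iintR (fun z => reC (F (y, z)))))
   (Rintegral lebesgue_measure setT (fun y => iintR (fun z => imC (F (y, z))))).

Definition C0fun n (phi : 'rV[R]_n -> tens n) : Prop :=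
  (forall idx, continuous (fun y => reC (phi y idx)) /\
               continuous (fun y => imC (phi y idx))) /\
  compact (closure [set y | exists idx, phi y idx != 0]).
Definition L2Z (g : Zsp -> R[i]) : Prop :=
  measurable_fun setT (fun z => reC (g z)) /\
  measurable_fun setT (fun z => imC (g z)) /\
  (iintE (fun z => ((reC (g z)) ^+ 2 + (imC (g z)) ^+ 2)%:E) < +oo)%E.
Definition elem n (phi : 'rV[R]_n -> tens n) (gs : 'I_n -> Zsp -> R[i]) : kern n :=
  fun xs idx => phi (\row_k (xs k).1) idx * \prod_(k < n) gs k (xs k).2.
Definition Fspace n (f : kern n) : Prop :=
  exists (m : nat) (phis : 'I_m -> 'rV[R]_n -> tens n) (gss : 'I_m -> 'I_n -> Zsp -> R[i]),
    (forall j, C0fun (phis j) /\ forall k, L2Z (gss j k)) /\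
    f = (fun xs idx => \sum_(j < m) elem (phis j) (gss j) xs idx).

(* (x_1..x_n) |-> A(y_i, y_{i+1})_i f(x_1,..,x_{i+1},x_i,..,x_n) *)
Definition swapk n (i : 'I_n) (A : R -> R -> op2) (f : kern n) : kern n :=
  fun xs => op_at i (A (xs i).1 (xs (nxt i)).1) (f (fun k => xs (sw i k))).
(* g^(n-2)(x_1..x_{n-2}) = int_X Tr_i f(x_1..x_{i-1},x,x,x_i..x_{n-2}) dx *)
Definition gker n (i : 'I_n) (f : kern n) : kern (n - 2) :=
  fun ys jdx => intX (fun x => Tr_at i (f (ins2 i ys x)) jdx).
Definition ktens n m (f : kern n) (h : kern m) : kern (n + m) :=
  fun xs idx => f (fun k => xs (lshift m k)) (fun k => idx (lshift m k)) *
                h (fun k => xs (rshift n k)) (fun k => idx (rshift n k)).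
Definition scat n m (s : 'I_n -> bool) (t : 'I_m -> bool) : 'I_(n + m) -> bool :=
  fun k => match fintype.split k with inl a => s a | inr b => t b end.
Definition kstar n (f : kern n) : kern n :=
  fun xs idx => conjc (f (fun k => xs (rev_ord k)) (fun k => idx (rev_ord k))).
Definition sstar n (s : 'I_n -> bool) : 'I_n -> bool := fun k => ~~ s (rev_ord k).

Definition Qt (Q : R -> R -> op2) (y1 y2 : R) : op2 :=
  fun p q => Q y1 y2 (p.2, q.2) (p.1, q.1).
Definition Qhat (Q : R -> R -> op2) (y1 y2 : R) : op2 :=
  fun p q => conjc (Q y2 y1 (p.2, p.1) (q.2, q.1)).

Definition Q_assumptions (Q : R -> R -> op2) : Prop :=
  (forall a b, continuous (fun p : R * R => reC (Q p.1 p.2 a b)) /\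
               continuous (fun p : R * R => imC (Q p.1 p.2 a b))) /\
  (forall y1 y2, op_mul (op_adj (Q y1 y2)) (Q y1 y2) = op_id /\
                 op_mul (Q y1 y2) (op_adj (Q y1 y2)) = op_id) /\
  (forall y1 y2, op_adj (Q y1 y2) = Q y2 y1) /\
  (forall (y1 y2 y3 : R) (t : tens 3),
     op_at (@inord 2 0) (Q y1 y2) (op_at (@inord 2 1) (Q y1 y3)
       (op_at (@inord 2 0) (Q y2 y3) t)) =
     op_at (@inord 2 1) (Q y2 y3) (op_at (@inord 2 0) (Q y1 y3)
       (op_at (@inord 2 1) (Q y1 y2) t))).

Definition QMCR_model (Q : R -> R -> op2) (A : lalgType R[i]) (star : A -> A)
    (Phi : forall n, kern n -> ('I_n -> bool) -> A) : Prop :=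
  (forall a b : A, star (a + b) = star a + star b) /\
  (forall (c : R[i]) (a : A), star (c *: a) = conjc c *: star a) /\
  (forall a b : A, star (a * b) = star b * star a) /\
  (forall a : A, star (star a) = a) /\
  (forall n (f h : kern n) s (a b : R[i]), Fspace f -> Fspace h ->
     Phi n (fun xs idx => a * f xs idx + b * h xs idx) s = a *: Phi n f s + b *: Phi n h s) /\
  (forall (f : kern 0) s xs idx, Fspace f -> Phi 0 f s = f xs idx *: 1) /\
  (forall n m (f : kern n) (h : kern m) s t, Fspace f -> Fspace h ->
     Phi n f s * Phi m h t = Phi (n + m) (ktens f h) (scat s t)) /\
  (forall n (f : kern n) s, Fspace f -> star (Phi n f s) = Phi n (kstar f) (sstar s)) /\
  (forall n (i : 'I_n) (f : kern n) (s : 'I_n -> bool), (i.+1 < n)%N -> s i -> s (nxt i) -> Fspace f ->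
     Phi n f s = Phi n (swapk i Q f) (fun k => s (sw i k))) /\
  (forall n (i : 'I_n) (f : kern n) (s : 'I_n -> bool), (i.+1 < n)%N -> ~~ s i -> ~~ s (nxt i) -> Fspace f ->
     Phi n f s = Phi n (swapk i (Qhat Q) f) (fun k => s (sw i k))) /\
  (forall n (i : 'I_n) (f : kern n) (s : 'I_n -> bool), (i.+1 < n)%N -> ~~ s i -> s (nxt i) -> Fspace f ->
     Phi n f s = Phi n (swapk i (fun y1 y2 => Qt Q y2 y1) f) (fun k => s (sw i k))
                 + Phi (n - 2)%N (gker i f) (rem2 i s)).

End QMCR.

(* Main.v *)
Require Import Defs.
From HB Require Import structures.
From mathcomp Require Import all_boot all_order all_algebra.
From mathcomp Require Import all_classical all_reals all_analysis.
From mathcomp.real_closed Require Import complex.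
From mathcomp Require Import zify.
Import Order.TTheory GRing.Theory Num.Theory.
Import numFieldNormedType.Exports.
Local Open Scope ring_scope.
Set Implicit Arguments.
Unset Strict Implicit.


Definition ccont {R : realType} {T : topologicalType} (F : T -> R[i]) :=
  continuous (fun t => complex.Re (F t)) /\ continuous (fun t => complex.Im (F t)).

Section CC.
Variable R : realType.
Variable T : topologicalType.


Lemma cD (f g : T -> R) t : {for t, continuous f} -> {for t, continuous g} ->
  {for t, continuous (fun x => f x + g x)}.
Proof. exact: continuousD. Qed.
Lemma cM (f g : T -> R) t : {for t, continuous f} -> {for t, continuous g} ->
  {for t, continuous (fun x => f x * g x)}.
Proof. exact: continuousM. Qed.
Lemma cN (f : T -> R) t : {for t, continuous f} ->
  {for t, continuous (fun x => - f x)}.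
Proof. exact: continuousN. Qed.
Lemma cB (f g : T -> R) t : {for t, continuous f} -> {for t, continuous g} ->
  {for t, continuous (fun x => f x - g x)}.
Proof. by move=> a b; apply: cD => //; apply: cN. Qed.
Lemma cV (f : T -> R) t : f t != 0 -> {for t, continuous f} ->
  {for t, continuous (fun x => (f x)^-1)}.
Proof. exact: continuousV. Qed.


Lemma ccont_cst (c : R[i]) : ccont (fun _ : T => c).
Proof. by split => t; apply: cst_continuous. Qed.

Lemma ccontD (F G : T -> R[i]) : ccont F -> ccont G -> ccont (fun t => F t + G t).
Proof.
move=> [F1 F2] [G1 G2].
have E1 : (fun t => complex.Re (F t + G t)) = (fun t => complex.Re (F t) + complex.Re (G t)).
  by apply: funext => t; case: (F t) => a b; case: (G t).
have E2 : (fun t => complex.Im (F t + G t)) = (fun t => complex.Im (F t) + complex.Im (G t)).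
  by apply: funext => t; case: (F t) => a b; case: (G t).
rewrite /ccont E1 E2; split => t; apply: cD; by [apply: F1|apply: F2|apply: G1|apply: G2].
Qed.

Lemma ccontM (F G : T -> R[i]) : ccont F -> ccont G -> ccont (fun t => F t * G t).
Proof.
move=> [F1 F2] [G1 G2].
have E1 : (fun t => complex.Re (F t * G t)) =
   (fun t => complex.Re (F t) * complex.Re (G t) - (complex.Im (F t) * complex.Im (G t))).
  by apply: funext => t; case: (F t) => a b; case: (G t).
have E2 : (fun t => complex.Im (F t * G t)) =
   (fun t => complex.Re (F t) * complex.Im (G t) + complex.Im (F t) * complex.Re (G t)).
  by apply: funext => t; case: (F t) => a b; case: (G t).
rewrite /ccont E1 E2; split => t.
  apply: cB; apply: cM; by [apply: F1|apply: F2|apply: G1|apply: G2].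
apply: cD; apply: cM; by [apply: F1|apply: F2|apply: G1|apply: G2].
Qed.

Lemma ccont_sum (I : finType) (P : pred I) (F : I -> T -> R[i]) :
  (forall j, ccont (F j)) -> ccont (fun t => \sum_(j | P j) F j t).
Proof.
move=> H.
have K : forall l : seq I, ccont (fun t => \sum_(j <- l | P j) F j t).
  elim => [|a l IH].
    under [X in ccont X]funext => t do rewrite big_nil. exact: ccont_cst.
  under [X in ccont X]funext => t do rewrite big_cons.
  case: (P a); last exact: IH.
  exact: ccontD.
exact: (K (index_enum I)).
Qed.

Lemma ccont_prod (I : finType) (F : I -> T -> R[i]) :
  (forall j, ccont (F j)) -> ccont (fun t => \prod_j F j t).
Proof.
move=> H.
have K : forall l : seq I, ccont (fun t => \prod_(j <- l) F j t).
  elim => [|a l IH].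
    under [X in ccont X]funext => t do rewrite big_nil. exact: ccont_cst.
  under [X in ccont X]funext => t do rewrite big_cons.
  exact: ccontM.
exact: (K (index_enum I)).
Qed.

Lemma ccontV (F : T -> R[i]) : ccont F -> (forall t, F t != 0) -> ccont (fun t => (F t)^-1).
Proof.
move=> [F1 F2] Fn.
have N t : complex.Re (F t) ^+ 2 + complex.Im (F t) ^+ 2 != 0.
  have := Fn t; case: (F t) => a b /= H.
  rewrite paddr_eq0 ?sqr_ge0 // !expf_eq0 /=.
  apply/negP => /andP [/eqP a0 /eqP b0]; move: H; by rewrite a0 b0 eqxx.
have E1 : (fun t => complex.Re ((F t)^-1)) =
   (fun t => complex.Re (F t) * (complex.Re (F t) ^+ 2 + complex.Im (F t) ^+ 2)^-1).
  by apply: funext => t; case: (F t) => a b.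
have E2 : (fun t => complex.Im ((F t)^-1)) =
   (fun t => - (complex.Im (F t) * (complex.Re (F t) ^+ 2 + complex.Im (F t) ^+ 2)^-1)).
  by apply: funext => t; case: (F t) => a b.
have C t : {for t, continuous (fun t => (complex.Re (F t) ^+ 2 + complex.Im (F t) ^+ 2)^-1)}.
  apply: cV; first exact: N.
  apply: cD; apply: cM; by [apply: F1|apply: F2].
rewrite /ccont E1 E2; split => t.
  apply: cM; by [apply: F1|apply: C].
apply: cN; apply: cM; by [apply: F2|apply: C].
Qed.

Lemma ccont_comp (U : topologicalType) (F : U -> R[i]) (g : T -> U) :
  ccont F -> continuous g -> ccont (fun t => F (g t)).
Proof.
move=> [F1 F2] gc; split => t.
  exact: (continuous_comp (gc t) (F1 (g t))).
exact: (continuous_comp (gc t) (F2 (g t))).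
Qed.

End CC.


Section Pos.
Variables (n : nat) (i : 'I_n).
Hypothesis hi : (i.+1 < n)%N.

Lemma nxtE : val (nxt i) = i.+1.
Proof. by rewrite /nxt val_insubd hi. Qed.

Lemma nxt_neq : (i == nxt i) = false.
Proof. by apply/negbTE; rewrite -val_eqE nxtE /= eqn_leq ltnn andbF. Qed.

Lemma sw_i : sw i i = nxt i.
Proof. by rewrite /sw eqxx. Qed.

Lemma sw_nxt : sw i (nxt i) = i.
Proof. by rewrite /sw eq_sym nxt_neq eqxx. Qed.

Lemma sw_other k : k != i -> k != nxt i -> sw i k = k.
Proof. by rewrite /sw => /negbTE -> /negbTE ->. Qed.

Lemma swK k : sw i (sw i k) = k.
Proof.
case: (eqVneq k i) => [->|ki]; first by rewrite sw_i sw_nxt.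
case: (eqVneq k (nxt i)) => [->|kn]; first by rewrite sw_nxt sw_i.
by rewrite !sw_other.
Qed.

Lemma sw_inj : injective (sw i).
Proof. exact: (can_inj swK). Qed.

Lemma upd_eq (T : Type) (t : 'I_n -> T) j a : upd t j a j = a.
Proof. by rewrite /upd eqxx. Qed.

Lemma upd_neq (T : Type) (t : 'I_n -> T) j a k : k != j -> upd t j a k = t k.
Proof. by rewrite /upd => /negbTE ->. Qed.

Lemma upd4 (T : Type) (t : 'I_n -> T) a b c e :
  upd (upd (upd (upd t i a) (nxt i) b) i c) (nxt i) e = upd (upd t i c) (nxt i) e.
Proof.
apply: funext => k; rewrite /upd.
by case: (k == nxt i) => //; case: (k == i).
Qed.

Lemma upd_self (T : Type) (t : 'I_n -> T) : upd (upd t i (t i)) (nxt i) (t (nxt i)) = t.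
Proof.
apply: funext => k; rewrite /upd.
case: (eqVneq k (nxt i)) => [->//|_]; case: (eqVneq k i) => [->//|//].
Qed.

Lemma upd2_i (T : Type) (t : 'I_n -> T) a b : upd (upd t i a) (nxt i) b i = a.
Proof. by rewrite /upd nxt_neq eqxx. Qed.

Lemma upd2_nxt (T : Type) (t : 'I_n -> T) a b : upd (upd t i a) (nxt i) b (nxt i) = b.
Proof. by rewrite /upd eqxx. Qed.

End Pos.

Section Ops.
Variables (R : realType) (d r : nat).
Variables (n : nat) (i : 'I_n).
Hypothesis hi : (i.+1 < n)%N.

Lemma op_at_mul (A B : op2 R r) (t : tens R r n) idx :
  op_at i A (op_at i B t) idx = op_at i (op_mul A B) t idx.
Proof.
rewrite /op_at /op_mul.
under eq_bigr => u _.
  rewrite upd2_i // upd2_nxt // -surjective_pairing.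
  under eq_bigr => w _ do rewrite upd4.
  over.
under eq_bigr => u _ do rewrite mulr_sumr.
rewrite exchange_big /=; apply: eq_bigr => w _.
rewrite mulr_suml; apply: eq_bigr => u _.
by rewrite mulrA.
Qed.

Lemma op_at_delta (c : R[i]) (t : tens R r n) idx :
  \sum_(u : 'I_r * 'I_r) c * ((idx i, idx (nxt i)) == u)%:R * t (upd (upd idx i u.1) (nxt i) u.2)
  = c * t idx.
Proof.
rewrite (bigD1 (idx i, idx (nxt i))) //= eqxx mulr1 upd_self big1 ?addr0 // => u.
by rewrite eq_sym => /negbTE ->; rewrite mulr0 mul0r.
Qed.

Lemma op_at_id (t : tens R r n) idx : op_at i (@op_id R r) t idx = t idx.
Proof.
rewrite /op_at /op_id -[RHS]mul1r -op_at_delta.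
by apply: eq_bigr => u _; rewrite mul1r.
Qed.

Lemma op_at_sc (c : R[i]) (t : tens R r n) idx :
  op_at i (fun p q => c * (p == q)%:R) t idx = c * t idx.
Proof. by rewrite /op_at -op_at_delta. Qed.

End Ops.


Section Ins.
Variables (n : nat) (i : 'I_n).
Hypothesis hi : (i.+1 < n)%N.
Lemma nxtE' : val (nxt i) = i.+1.
Proof. by rewrite /nxt val_insubd hi. Qed.

Lemma ext_eq m (T : Type) (ys : 'I_m -> T) v w p : (p < m)%N -> ext ys v p = ext ys w p.
Proof. by rewrite /ext => pm; case: insubP => //=; rewrite pm. Qed.

Lemma ins2_i (T : Type) m (ys : 'I_m -> T) v : ins2 i ys v i = v.
Proof. by rewrite /ins2 ltnn leqnSn. Qed.

Lemma ins2_nxt (T : Type) m (ys : 'I_m -> T) v : ins2 i ys v (nxt i) = v.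
Proof. by rewrite /ins2 nxtE' ltnNge leqnSn /= leqnn. Qed.

Lemma ins2_other (T : Type) (ys : 'I_(n - 2) -> T) v w k :
  k != i -> k != nxt i -> ins2 i ys v k = ins2 i ys w k.
Proof.
rewrite -!val_eqE nxtE' /= /ins2 => ki kn.
have kn' := ltn_ord k.
case: ifP => kl.
  apply: ext_eq; move/eqP: ki; move/eqP: kn; lia.
case: ifP => kl2.
  exfalso; move/eqP: ki; move/eqP: kn; move: kl kl2; lia.
apply: ext_eq; move/eqP: ki; move/eqP: kn; move: kl kl2; lia.
Qed.
End Ins.

Section Tr.
Variables (R : realType) (r : nat).
Variables (n : nat) (i : 'I_n).
Hypothesis hi : (i.+1 < n)%N.

Lemma ins2_sw (T : Type) (ys : 'I_(n - 2) -> T) v :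
  (fun k => ins2 i ys v (sw i k)) = ins2 i ys v.
Proof.
apply: funext => k.
case: (eqVneq k i) => [->|ki]; first by rewrite sw_i // ins2_nxt // ins2_i.
case: (eqVneq k (nxt i)) => [->|kn]; first by rewrite sw_nxt // ins2_nxt // ins2_i.
by rewrite sw_other.
Qed.

Lemma rem2_sw (s : 'I_n -> bool) : rem2 i (fun k => s (sw i k)) = rem2 i s.
Proof.
apply: funext => k.
have hq : ((if (k < i)%N then (k:nat) else k.+2) < n)%N.
  by case: ifP => _; have := ltn_ord k; lia.
rewrite /rem2 sw_other //.
  by rewrite -val_eqE val_insubd hq; case: ifP => /= ?; have := ltn_ord k; lia.
by rewrite -val_eqE val_insubd hq nxtE //; case: ifP => /= ?; have := ltn_ord k; lia.
Qed.

Lemma upd_ins2 (jdx : 'I_(n - 2) -> 'I_r) k k' a b :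
  upd (upd (ins2 i jdx k) i a) (nxt i) b = upd (upd (ins2 i jdx k') i a) (nxt i) b.
Proof.
apply: funext => q; rewrite /upd.
case: (eqVneq q (nxt i)) => // qn; case: (eqVneq q i) => // qi.
exact: ins2_other.
Qed.

Definition Jx (jdx : 'I_(n - 2) -> 'I_r) (u : 'I_r * 'I_r) : 'I_n -> 'I_r :=
  upd (upd (ins2 i jdx u.1) i u.1) (nxt i) u.2.

Lemma Tr_op (M : op2 R r) (t : tens R r n) jdx :
  Tr_at i (op_at i M t) jdx = trace2 (op_app2 M (fun u => t (Jx jdx u))).
Proof.
rewrite /Tr_at /op_at /trace2 /op_app2; apply: eq_bigr => k _.
rewrite ins2_i ins2_nxt //; apply: eq_bigr => u _.
by rewrite /Jx (upd_ins2 _ k u.1).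
Qed.

Lemma Tr_plain (t : tens R r n) jdx :
  Tr_at i t jdx = trace2 (fun u => t (Jx jdx u)).
Proof.
rewrite /Tr_at /trace2; apply: eq_bigr => k _.
rewrite /Jx /=.
have := @upd_self n i _ (ins2 i jdx k); rewrite ins2_i ins2_nxt // => ->.
by [].
Qed.

End Tr.

Section Fsp.
Local Open Scope classical_set_scope.
Variables (R : realType) (d r : nat).

Lemma coordc n (a : 'I_n) : continuous (fun y : 'rV[R]_n => y 0 a).
Proof. exact: coord_continuous. Qed.
Lemma pairc n (a b : 'I_n) : continuous (fun y : 'rV[R]_n => (y 0 a, y 0 b)).
Proof.
move=> y; apply: (@cvg_pair _ _ _ (nbhs y) (nbhs (y 0 a)) (nbhs (y 0 b))).
all: exact: coordc.
Qed.
Lemma swapc : continuous (fun t : R * R => (t.2, t.1)).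
Proof.
move=> y; apply: (@cvg_pair _ _ _ (nbhs y) (nbhs y.2) (nbhs y.1)).
exact: cvg_snd. exact: cvg_fst.
Qed.

Definition rperm n (p : 'I_n -> 'I_n) (y : 'rV[R]_n) : 'rV[R]_n := \row_k y 0 (p k).
Arguments rperm {n} p y.

Lemma permc n (p : 'I_n -> 'I_n) : continuous (rperm p).
Proof.
move=> y A /nbhs_ballP [e e0 eA]; apply/nbhs_ballP; exists e => // z yz; apply: eA.
move: yz; rewrite /ball /= => -[e1 H]; split => // a b; rewrite !mxE; exact: H.
Qed.

Lemma rpermK n (i : 'I_n) : (i.+1 < n)%N -> forall y, rperm (sw i) (rperm (sw i) y) = y.
Proof.
move=> hi y; apply/rowP => k; rewrite !mxE swK //.
Qed.

Definition swphi n (i : 'I_n) (B : R -> R -> op2 R r) (phi : 'rV[R]_n -> tens R r n) :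
  'rV[R]_n -> tens R r n :=
  fun y idx => \sum_(u : 'I_r * 'I_r) B (y 0 i) (y 0 (nxt i)) (idx i, idx (nxt i)) u *
     phi (rperm (sw i) y) (upd (upd idx i u.1) (nxt i) u.2).
Arguments swphi {n} i B phi.

Lemma C0fun_swphi n (i : 'I_n) (B : R -> R -> op2 R r) phi :
  (i.+1 < n)%N -> (forall p q, ccont (fun t : R * R => B t.1 t.2 p q)) ->
  C0fun phi -> C0fun (swphi i B phi).
Proof.
move=> hi HB [Hc Hcomp]; split.
  move=> idx.
  suff : ccont (fun y => swphi i B phi y idx) by [].
  apply: ccont_sum => u; apply: ccontM.
    have H := (@ccont_comp R _ _ (fun t : R * R => B t.1 t.2 (idx i, idx (nxt i)) u)
             (fun y : 'rV[R]_n => (y 0 i, y 0 (nxt i))) (HB _ u) (@pairc _ _ _)).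
    exact: H.
  exact: (@ccont_comp R _ _ (fun y => phi y (upd (upd idx i u.1) (nxt i) u.2)) (rperm (sw i)) (Hc _) (@permc _ _)).
set S := [set y | exists idx, phi y idx != 0].
have sub : [set y | exists idx, swphi i B phi y idx != 0] `<=` rperm (sw i) @^-1` S.
  move=> y [idx Hne] /=.
  case: (pselect (exists idx', phi (rperm (sw i) y) idx' != 0)) => // Hno.
  exfalso; move/negP: Hne; apply; apply/eqP.
  rewrite /swphi big1 // => u _.
  have -> : phi (rperm (sw i) y) (upd (upd idx i u.1) (nxt i) u.2) = 0.
    by apply/eqP; apply/negP => h; apply: Hno; exists (upd (upd idx i u.1) (nxt i) u.2); apply/negP.
  by rewrite mulr0.
have cl : closed (rperm (sw i) @^-1` closure S).
  by apply: (proj1 (continuous_closedP _) (@permc _ _)); exact: closed_closure.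
have sub2 : closure [set y | exists idx, swphi i B phi y idx != 0] `<=` rperm (sw i) @^-1` closure S.
  rewrite [X in _ `<=` X](proj1 (closure_id _) cl).
  apply: closureS; apply: (subset_trans sub) => y /=; exact: subset_closure.
have eq : rperm (sw i) @^-1` closure S = [set rperm (sw i) x | x in closure S].
  apply/seteqP; split => y /=.
    by move=> h; exists (rperm (sw i) y) => //; rewrite rpermK.
  by move=> [x hx <-]; rewrite rpermK.
have cK : compact (rperm (sw i) @^-1` closure S).
  rewrite eq; apply: continuous_compact => //.
  exact: continuous_subspaceT (@permc _ _).
exact: (subclosed_compact (@closed_closure _ _) cK sub2).
Qed.

Lemma Fspace_swapk n (i : 'I_n) (B : R -> R -> op2 R r) (f : kern R d r n) :
  (i.+1 < n)%N -> (forall p q, ccont (fun t : R * R => B t.1 t.2 p q)) ->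
  Fspace f -> Fspace (swapk i B f).
Proof.
move=> hi HB [m [phis [gss [Hj ->]]]].
exists m, (fun j => swphi i B (phis j)), (fun j k => gss j (sw i k)).
split.
  move=> j; split; last by move=> k; exact: (Hj j).2.
  exact: C0fun_swphi (Hj j).1.
apply: funext => xs; apply: funext => idx.
rewrite /swapk /op_at /elem /swphi !mxE.
have Ep : rperm (sw i) (\row_k (xs k).1) = \row_k (xs (sw i k)).1.
  by apply/rowP => k; rewrite !mxE.
have Eg j : \prod_k gss j k (xs (sw i k)).2 = \prod_k gss j (sw i k) (xs k).2.
  by rewrite (reindex_inj (@sw_inj n i hi)) /=; apply: eq_bigr => k _; rewrite swK.
under eq_bigr => u _ do rewrite mulr_sumr.
rewrite exchange_big /=; apply: eq_bigr => j _.
rewrite mulr_suml; apply: eq_bigr => u _.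
by rewrite Ep Eg mulrA.
Qed.

End Fsp.

Section Inv.
Variables (R : realType) (r : nat).
Local Notation T2 := ('I_r * 'I_r)%type.
Local Notation N := #|{: T2}|.

Definition mxo (A : op2 R r) : 'M[R[i]]_N := \matrix_(a, b) A (enum_val a) (enum_val b).

Lemma sum_T2 (F : T2 -> R[i]) : \sum_(u : T2) F u = \sum_(k < N) F (enum_val k).
Proof.
rewrite (reindex (@enum_val T2 (mem {: T2}))) //=.
exists enum_rank => x _; [exact: enum_valK | exact: enum_rankK].
Qed.

Lemma mxoM A B : mxo (op_mul A B) = mxo A *m mxo B.
Proof.
apply/matrixP => a b; rewrite !mxE /op_mul sum_T2.
by apply: eq_bigr => k _; rewrite !mxE.
Qed.

Lemma mxo_id : mxo (@op_id R r) = 1%:M.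
Proof.
apply/matrixP => a b; rewrite !mxE /op_id.
by rewrite (inj_eq enum_val_inj).
Qed.

Lemma mxo_entry A p q : A p q = mxo A (enum_rank p) (enum_rank q).
Proof. by rewrite mxE !enum_rankK. Qed.

Lemma inv_formula m (M K : 'M[R[i]]_m) : M *m K = 1%:M ->
  \det M != 0 /\ K = (\det M)^-1 *: \adj M.
Proof.
move=> H.
have hd : \det M * \det K = 1 by rewrite -det_mulmx H det1.
have nz : \det M != 0.
  by apply/negP => /eqP h; move: hd; rewrite h mul0r => /eqP; rewrite eq_sym oner_eq0.
split => //.
have : \adj M *m (M *m K) = \adj M by rewrite H mulmx1.
rewrite mulmxA mul_adj_mx mul_scalar_mx => <-.
by rewrite scalerA mulVf // scale1r.
Qed.

Lemma ccont_det (T : topologicalType) m (Mf : T -> 'M[R[i]]_m) :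
  (forall a b, ccont (fun t => Mf t a b)) -> ccont (fun t => \det (Mf t)).
Proof.
move=> H; rewrite /determinant.
apply: ccont_sum => s; apply: ccontM; first exact: ccont_cst.
by apply: ccont_prod => k; apply: H.
Qed.

Lemma ccont_adj (T : topologicalType) m (Mf : T -> 'M[R[i]]_m) a b :
  (forall a b, ccont (fun t => Mf t a b)) -> ccont (fun t => \adj (Mf t) a b).
Proof.
move=> H.
have -> : (fun t => \adj (Mf t) a b) =
   (fun t => (-1) ^+ (b + a) * \det (row' b (col' a (Mf t)))).
  by apply: funext => t; rewrite mxE.
apply: ccontM; first exact: ccont_cst.
apply: ccont_det => x y.
have -> : (fun t => row' b (col' a (Mf t)) x y) = (fun t => Mf t (lift b x) (lift a y)).
  by apply: funext => t; rewrite !mxE.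
exact: H.
Qed.

End Inv.

Section Main.
Variables (R : realType) (d r : nat).

Lemma op_atZ n (i : 'I_n) (A : op2 R r) (t : tens R r n) (c : R[i]) idx :
  op_at i A (fun idx => c * t idx) idx = c * op_at i A t idx.
Proof. by rewrite /op_at mulr_sumr; apply: eq_bigr => u _; rewrite mulrCA. Qed.

Lemma Tr_atZ n (i : 'I_n) (t : tens R r n) (c : R[i]) jdx :
  Tr_at i (fun idx => c * t idx) jdx = c * Tr_at i t jdx.
Proof. by rewrite /Tr_at mulr_sumr. Qed.

Lemma ccont_Q (Q : R -> R -> op2 R r) (HQ : Q_assumptions Q) a b :
  ccont (fun t : R * R => Q t.1 t.2 a b).
Proof. exact: (HQ.1 a b). Qed.

Lemma ccont_Qt (Q : R -> R -> op2 R r) (HQ : Q_assumptions Q) p q :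
  ccont (fun t : R * R => Qt Q t.1 t.2 p q).
Proof. exact: (ccont_Q HQ (p.2, q.2) (p.1, q.1)). Qed.

Lemma ccont_Qt' (Q : R -> R -> op2 R r) (HQ : Q_assumptions Q) p q :
  ccont (fun t : R * R => Qt Q t.2 t.1 p q).
Proof.
have H := @ccont_comp R _ _ (fun t : R * R => Qt Q t.1 t.2 p q) (fun t : R * R => (t.2, t.1))
  (ccont_Qt HQ p q) (@swapc R).
exact: H.
Qed.

Lemma ccont_Qtinv (Q : R -> R -> op2 R r) (HQ : Q_assumptions Q)
    (Qtinv : R -> R -> op2 R r)
    (HQtinv : forall y1 y2 : R,
        op_mul (Qt Q y1 y2) (Qtinv y1 y2) = @op_id R r /\
        op_mul (Qtinv y1 y2) (Qt Q y1 y2) = @op_id R r) p q :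
  ccont (fun t : R * R => Qtinv t.1 t.2 p q).
Proof.
have F (t : R * R) : \det (mxo (Qt Q t.1 t.2)) != 0 /\
    mxo (Qtinv t.1 t.2) = (\det (mxo (Qt Q t.1 t.2)))^-1 *: \adj (mxo (Qt Q t.1 t.2)).
  by apply: inv_formula; rewrite -mxoM (HQtinv _ _).1 mxo_id.
have E : (fun t : R * R => Qtinv t.1 t.2 p q) =
  (fun t => (\det (mxo (Qt Q t.1 t.2)))^-1 *
            \adj (mxo (Qt Q t.1 t.2)) (enum_rank p) (enum_rank q)).
  apply: funext => t; rewrite mxo_entry (F t).2 mxE //.
have Ent a b : ccont (fun t : R * R => mxo (Qt Q t.1 t.2) a b).
  have -> : (fun t : R * R => mxo (Qt Q t.1 t.2) a b) =
            (fun t : R * R => Qt Q t.1 t.2 (enum_val a) (enum_val b)).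
    by apply: funext => t; rewrite mxE.
  exact: ccont_Qt.
rewrite E; apply: ccontM.
  apply: ccontV; last by move=> t; exact: (F t).1.
  exact: ccont_det.
exact: ccont_adj.
Qed.

End Main.

Unset Implicit Arguments.
Set Strict Implicit.

(* Sign convention: true = "+", false = "-".  Positions are 0-based: the
   theorem's i : 'I_n corresponds to the paper's index i+1. *)
Theorem proposition2p3 (R : realType) (d r : nat) (hd : (2 <= d)%N)
    (Q : R -> R -> op2 R r) (HQ : Q_assumptions Q)
    (Qtinv : R -> R -> op2 R r)
    (HQtinv : forall y1 y2 : R,
        op_mul (Qt Q y1 y2) (Qtinv y1 y2) = @op_id R r /\
        op_mul (Qtinv y1 y2) (Qt Q y1 y2) = @op_id R r)
    (kappa : R)
    (Hkappa : forall (y : R) (v : ('I_r * 'I_r)%type -> R[i]),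
        trace2 (op_app2 (Qtinv y y) v) = (kappa%:C)%C * trace2 v)
    (A : lalgType R[i]) (star : A -> A)
    (Phi : forall n : nat, kern R d r n -> ('I_n -> bool) -> A)
    (HA : QMCR_model Q star Phi)
    (n : nat) (i : 'I_n) (s : 'I_n -> bool) (f : kern R d r n) :
  (i.+1 < n)%N -> s i = true -> s (nxt i) = false -> Fspace f ->
  Phi n f s =
    Phi n (swapk i Qtinv f) (fun k => s (sw i k))
    - (kappa%:C)%C *: Phi (n - 2)%N (gker i f) (rem2 i s).
Proof.
move=> hi si snxt Ff.
have [_ [_ [_ [_ [lin [_ [_ [_ [_ [_ rmp]]]]]]]]]] := HA.
set c := (kappa%:C)%C.
set s' := fun k => s (sw i k).
set h := swapk i Qtinv f.
have Fh : Fspace h := Fspace_swapk hi (ccont_Qtinv HQ HQtinv) Ff.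
have s'i : ~~ s' i by rewrite /s' sw_i // snxt.
have s'n : s' (nxt i) by rewrite /s' sw_nxt // si.
have Hs'' : (fun k => s' (sw i k)) = s by apply: funext => k; rewrite /s' swK.
have Hsw : forall (xs : 'I_n -> Xsp R d), (fun k => xs (sw i (sw i k))) = xs.
  by move=> xs; apply: funext => k; rewrite swK.
have Eh : swapk i (fun y1 y2 => Qt Q y2 y1) h = f.
  apply: funext => xs; apply: funext => idx.
  rewrite /h /swapk /= sw_i // sw_nxt // Hsw op_at_mul // (HQtinv _ _).1 op_at_id //.
have R1 := rmp n i h s' hi s'i s'n Fh.
rewrite Eh Hs'' rem2_sw // in R1.
pose G := swapk i (fun _ _ => @op_id R r) f.
pose cG := swapk i (fun _ _ (p q : 'I_r * 'I_r) => c * (p == q)%:R) f.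
have FG : Fspace G by apply: Fspace_swapk => // p q; exact: ccont_cst.
have FcG : Fspace cG by apply: Fspace_swapk => // p q; exact: ccont_cst.
have FG' : Fspace (swapk i (fun y1 y2 => Qt Q y2 y1) G) :=
  Fspace_swapk hi (ccont_Qt' HQ) FG.
have EcG ys : cG ys = (fun idx => c * G ys idx).
  apply: funext => idx; rewrite /cG /G /swapk op_at_sc op_at_id //.
have L1 : Phi n cG s' = c *: Phi n G s'.
  have -> : cG = (fun xs idx => c * G xs idx + 0 * G xs idx).
    by apply: funext => xs; apply: funext => idx; rewrite mul0r addr0 EcG.
  by rewrite lin // scale0r addr0.
have L2 : Phi n (swapk i (fun y1 y2 => Qt Q y2 y1) cG) s =
          c *: Phi n (swapk i (fun y1 y2 => Qt Q y2 y1) G) s.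
  have -> : swapk i (fun y1 y2 => Qt Q y2 y1) cG =
     (fun xs idx => c * swapk i (fun y1 y2 => Qt Q y2 y1) G xs idx +
                    0 * swapk i (fun y1 y2 => Qt Q y2 y1) G xs idx).
    apply: funext => xs; apply: funext => idx; rewrite mul0r addr0.
    by rewrite {1}/swapk EcG op_atZ.
  by rewrite lin // scale0r addr0.
have RG := rmp n i G s' hi s'i s'n FG.
have RcG := rmp n i cG s' hi s'i s'n FcG.
rewrite Hs'' in RG RcG.
have Egk : Phi (n - 2)%N (gker i cG) (rem2 i s') = c *: Phi (n - 2)%N (gker i G) (rem2 i s').
  apply: (addrI (Phi n (swapk i (fun y1 y2 => Qt Q y2 y1) cG) s)).
  rewrite -RcG L1 RG L2 scalerDr //.
have EGf : gker i G = gker i f.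
  apply: funext => ys; apply: funext => jdx; rewrite /gker; congr intX.
  apply: funext => x; congr Tr_at; apply: funext => idx.
  by rewrite /G /swapk ins2_sw // op_at_id.
have Ehc : gker i h = gker i cG.
  apply: funext => ys; apply: funext => jdx; rewrite /gker; congr intX.
  apply: funext => x.
  rewrite /h /cG /swapk !ins2_sw // ins2_i ins2_nxt //.
  have -> : op_at i (fun (p q : 'I_r * 'I_r) => c * (p == q)%:R) (f (ins2 i ys x)) =
            (fun idx => c * f (ins2 i ys x) idx).
    by apply: funext => idx; rewrite op_at_sc.
  by rewrite Tr_atZ Tr_op // Hkappa -Tr_plain.
rewrite rem2_sw // in Egk.
rewrite R1 Ehc Egk EGf addrK //.
Qed.
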